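(* Let $N\ge 1$ be an integer and $h,g>0$ real numbers. For $k\in\{0,1,\dots,N\}$ and $\Delta>0$ define $$R_k(\Delta):=\log\Big(1+(N-k)\frac{h^2}{1+\Delta}\Big)+\log(1+kg^2)-k\log\Big(\frac{1+\Delta}{\Delta}\Big)$$ (logarithms base $2$). For $i\in\{0,\dots,N-1\}$ let $\Delta^*_{(i)(i+1)}$ be the unique positive solution of $R_i(\Delta)=R_{i+1}(\Delta)$. Then $\Delta^*_{(i)(i+1)}$ is non-decreasing in $i$, i.e. $\Delta^*_{01}\le\Delta^*_{12}\le\cdots\le\Delta^*_{(N-1)(N)}$.
   Context: $R_k(\Delta)$ is the quantize-map-and-forward rate of a cut containing $k$ relays in the symmetric $N$-relay diamond network (all source-relay magnitudes equal $h$, all relay-destination magnitudes equal $g$) when every relay uses Gaussian quantization distortion $\Delta$. The equation $R_i(\Delta)=R_{i+1}(\Delta)$ has exactly one positive solution for each $i$. *)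

(* Defs.v *)
From Stdlib Require Import Reals.
Open Scope R_scope.

Definition log2 (x : R) : R := ln x / ln 2.

(* QMF rate of a cut containing k relays (symmetric N-relay diamond network),
   R_k(D) = log(1+(N-k) h^2/(1+D)) + log(1+k g^2) - k log((1+D)/D). *)
Definition Rk (N k : nat) (h g D : R) : R :=
  log2 (1 + INR (N - k) * h ^ 2 / (1 + D)) + log2 (1 + INR k * g ^ 2)
  - INR k * log2 ((1 + D) / D).

(* Main.v *)
Require Import Defs.
From Stdlib Require Import Reals Lra Lia Psatz.
Open Scope R_scope.

Lemma frac_lt x y z w : 0 < y -> 0 < w -> x * w < z * y -> x / y < z / w.
Proof.
  intros Hy Hw H. apply (Rmult_lt_reg_r (y * w)). nra.
  replace (x / y * (y * w)) with (x * w) by (field; lra).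
  replace (z / w * (y * w)) with (z * y) by (field; lra). lra.
Qed.

Lemma frac_le x y z w : 0 < y -> 0 < w -> x * w <= z * y -> x / y <= z / w.
Proof.
  intros Hy Hw H. apply (Rmult_le_reg_r (y * w)). nra.
  replace (x / y * (y * w)) with (x * w) by (field; lra).
  replace (z / w * (y * w)) with (z * y) by (field; lra). lra.
Qed.

Lemma ln_div x y : 0 < x -> 0 < y -> ln (x / y) = ln x - ln y.
Proof. intros. unfold Rdiv. rewrite ln_mult, ln_Rinv; try lra.
  apply Rinv_0_lt_compat; lra. Qed.

Definition aa (m H D : R) := 1 + m * H / (1 + D).
Definition cc (D : R) := (1 + D) / D.
Definition ff (m H D : R) := aa (m+1) H D * cc D / aa m H D.
Definition rr (k G : R) := (1 + k * G) / (1 + (k+1) * G).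

Lemma aa_pos m H D : 0 <= m -> 0 < H -> 0 < D -> 0 < aa m H D.
Proof. intros. unfold aa. assert (0 <= m * H / (1 + D)).
  apply Rmult_le_pos; [nra| left; apply Rinv_0_lt_compat; lra]. lra. Qed.

Lemma cc_gt1 D : 0 < D -> 1 < cc D.
Proof. intros. unfold cc. replace ((1+D)/D) with (1 + /D) by (field; lra).
  assert (0 < / D) by (apply Rinv_0_lt_compat; lra). lra. Qed.

Lemma ratio_t_lt m t1 t2 : 0 <= m -> 0 <= t1 -> t1 < t2 ->
  (1 + (m+1)*t1) / (1 + m*t1) < (1 + (m+1)*t2)/(1 + m*t2).
Proof. intros. apply frac_lt; nra. Qed.

Lemma ratio_m_le m t : 0 <= m -> 0 <= t ->
  (1 + (m+1+1)*t) / (1 + (m+1)*t) <= (1 + (m+1)*t)/(1 + m*t).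
Proof. intros. apply frac_le; nra. Qed.

Lemma ff_eq m H D : 0 <= m -> 0 < H -> 0 < D ->
  ff m H D = (1 + (m+1)*(H/(1+D))) / (1 + m*(H/(1+D))) * cc D.
Proof. intros. unfold ff, aa.
  replace (m*H/(1+D)) with (m*(H/(1+D))) by (unfold Rdiv; ring).
  replace ((m+1)*H/(1+D)) with ((m+1)*(H/(1+D))) by (unfold Rdiv; ring).
  unfold Rdiv. ring. Qed.

Lemma ff_pos m H D : 0 <= m -> 0 < H -> 0 < D -> 0 < ff m H D.
Proof. intros. unfold ff. pose proof (aa_pos m H D). pose proof (aa_pos (m+1) H D).
  pose proof (cc_gt1 D). apply Rdiv_lt_0_compat; try apply Rmult_lt_0_compat; try lra; auto.
  all: try (apply H4; lra); try (apply H3; lra). Qed.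

Lemma ff_dec m H D1 D2 : 0 <= m -> 0 < H -> 0 < D2 -> D2 < D1 -> ff m H D1 < ff m H D2.
Proof. intros. rewrite !ff_eq by lra.
  assert (Ht: H/(1+D1) < H/(1+D2)) by (apply frac_lt; nra).
  assert (Ht0: 0 <= H/(1+D1)) by (left; apply Rdiv_lt_0_compat; lra).
  pose proof (ratio_t_lt m _ _ H0 Ht0 Ht).
  assert (cc D1 < cc D2) by (unfold cc; apply frac_lt; nra).
  pose proof (cc_gt1 D1 ltac:(lra)).
  assert (1 <= (1 + (m+1)*(H/(1+D1))) / (1 + m*(H/(1+D1)))).
  { rewrite <- (Rdiv_diag 1) at 1 by lra. apply frac_le; nra. }
  nra. Qed.

Lemma ff_m m H D : 0 <= m -> 0 < H -> 0 < D -> ff (m+1) H D <= ff m H D.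
Proof. intros. rewrite !ff_eq by lra.
  assert (Ht0: 0 <= H/(1+D)) by (left; apply Rdiv_lt_0_compat; lra).
  pose proof (ratio_m_le m _ H0 Ht0). pose proof (cc_gt1 D H2).
  apply Rmult_le_compat_r; lra. Qed.

Lemma rr_le k G : 0 <= k -> 0 < G -> rr k G <= rr (k+1) G.
Proof. intros. unfold rr. apply frac_le; nra. Qed.

Lemma rr_pos k G : 0 <= k -> 0 < G -> 0 < rr k G.
Proof. intros. unfold rr. apply Rdiv_lt_0_compat; nra. Qed.

Lemma lnf m H D : 0 <= m -> 0 < H -> 0 < D ->
  ln (ff m H D) = ln (aa (m+1) H D) + ln (cc D) - ln (aa m H D).
Proof. intros. unfold ff. pose proof (aa_pos m H D). pose proof (aa_pos (m+1) H D).
  pose proof (cc_gt1 D).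
  assert (0 < aa m H D) by auto. assert (0 < aa (m+1) H D) by (apply H4; lra).
  assert (1 < cc D) by auto.
  rewrite ln_div; [rewrite ln_mult; [ring|lra|lra]| apply Rmult_lt_0_compat; lra | lra]. Qed.

Lemma lnr k G : 0 <= k -> 0 < G -> ln (rr k G) = ln (1 + k*G) - ln (1 + (k+1)*G).
Proof. intros. unfold rr. rewrite ln_div; nra. Qed.

Lemma core x y H G D1 D2 : 0 <= x -> 0 <= y -> 0 < H -> 0 < G -> 0 < D1 -> 0 < D2 ->
  ln (ff (x+1) H D1) + ln (rr y G) = 0 ->
  ln (ff x H D2) + ln (rr (y+1) G) = 0 -> D1 <= D2.
Proof. intros. destruct (Rle_lt_dec D1 D2) as [|Hlt]; auto. exfalso.
  pose proof (ff_dec x H D1 D2 H0 H2 H5 Hlt).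
  pose proof (ff_m x H D1 H0 H2 H4).
  pose proof (rr_le y G H1 H3) as Hrr.
  pose proof (ff_pos (x+1) H D1 ltac:(lra) H2 H4).
  pose proof (rr_pos y G H1 H3).
  assert (ln (ff (x+1) H D1) < ln (ff x H D2)) by (apply ln_increasing; lra).
  assert (ln (rr y G) <= ln (rr (y+1) G)).
  { destruct Hrr as [Hrr|Hrr]. left; apply ln_increasing; lra. right; rewrite Hrr; auto. }
  lra. Qed.

Theorem lemma4 (N : nat) (h g : R) (i : nat) (D1 D2 : R) :
  (1 <= N)%nat -> 0 < h -> 0 < g -> (i + 2 <= N)%nat ->
  0 < D1 -> Rk N i h g D1 = Rk N (i + 1) h g D1 ->
  0 < D2 -> Rk N (i + 1) h g D2 = Rk N (i + 2) h g D2 ->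
  D1 <= D2.
Proof.
  intros _ Hh Hg Hi HD1 E1 HD2 E2.
  set (n := (N - i - 2)%nat).
  assert (e0: (N - i = n + 1 + 1)%nat) by (unfold n; lia).
  assert (e1: (N - (i + 1) = n + 1)%nat) by (unfold n; lia).
  assert (e2: (N - (i + 2) = n)%nat) by (unfold n; lia).
  unfold Rk, log2 in E1, E2.
  rewrite e0, e1 in E1. rewrite e1, e2 in E2.
  rewrite !plus_INR in E1, E2. simpl INR in E1, E2.
  assert (Hl2 : 0 < ln 2) by (apply ln_lt_0 || (rewrite <- ln_1; apply ln_increasing; lra)).
  set (x := INR n) in *. set (y := INR i) in *.
  assert (Hx : 0 <= x) by apply pos_INR. assert (Hy : 0 <= y) by apply pos_INR.
  set (H := h^2) in *. set (G := g^2) in *.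
  assert (HH : 0 < H) by (unfold H; nra). assert (HG : 0 < G) by (unfold G; nra).
  apply (core x y H G D1 D2); auto.
  - rewrite lnf, lnr by lra. unfold aa, cc.
    apply (Rmult_eq_reg_r (/ ln 2)); [| apply Rinv_neq_0_compat; lra].
    unfold Rdiv in *. rewrite Rmult_0_l.
    match goal with |- ?A = 0 => match type of E1 with ?P = ?Q =>
      assert (A = P - Q) by ring end end. lra.
  - rewrite lnf, lnr by lra. unfold aa, cc.
    apply (Rmult_eq_reg_r (/ ln 2)); [| apply Rinv_neq_0_compat; lra].
    replace (y+(1+1)) with (y+1+1) in E2 by ring.
    unfold Rdiv in *. rewrite Rmult_0_l.
    match goal with |- ?A = 0 => match type of E2 with ?P = ?Q =>
      assert (A = P - Q) by ring end end. lra.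
Qed.
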